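(* Let $\Gamma$ be a subset of $M^{\mathbb{R}}_{n\times n}(\mathbb{C})$ such that for any $A,B\in\Gamma$ there exists a function $p:[0,1]\rightarrow M^{\mathbb{R}}_{n\times n}(\mathbb{C})$ whose entries are analytic functions on $[0,1]$ with $p(0)=A$, $p(1)=B$ and $p([0,1])\subset\Gamma$. Let $\Gamma_d$ be the set of matrices in $\Gamma$ whose eigenvalues are distinct. If $\Gamma$ contains at least one matrix with distinct eigenvalues, then $\Gamma_d$ is dense in $\Gamma$.
   Context: $M^{\mathbb{R}}_{n\times n}(\mathbb{C})$ denotes the set of $n\times n$ complex matrices all of whose eigenvalues are real, with the topology induced by the Frobenius norm. A complex-valued function is analytic on $[0,1]$ if it is the restriction of a function defined on an open interval containing $[0,1]$ which around each point is given by a convergent power series. Distinct eigenvalues means $n$ pairwise different eigenvalues. *)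

(* Defs.v *)
From HB Require Import structures.
From mathcomp Require Import all_boot all_order all_algebra.
From mathcomp Require Import reals.
From mathcomp Require Import complex.
Set Implicit Arguments. Unset Strict Implicit. Unset Printing Implicit Defensive.
Import Order.TTheory GRing.Theory Num.Theory.
Local Open Scope ring_scope.

Definition cabs (R : realType) (z : R[i]) : R := Normc.normc z.

Definition frob (R : realType) (n : nat) (A : 'M[R[i]]_n) : R :=
  Num.sqrt (\sum_(i < n) \sum_(j < n) cabs (A i j) ^+ 2).

Definition real_spectrum (R : realType) (n : nat) (A : 'M[R[i]]_n) : Prop :=
  forall z : R[i], eigenvalue A z -> Im z = 0.

Definition distinct_eigs (R : realType) (n : nat) (A : 'M[R[i]]_n) : Prop :=
  exists s : seq R[i], [/\ uniq s, size s = n & all (eigenvalue A) s].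

Definition series_to (R : realType) (u : nat -> R[i]) (L : R[i]) : Prop :=
  forall e : R, 0 < e -> exists N : nat, forall m : nat, (N <= m)%N ->
    cabs (\sum_(k < m) u k - L) < e.

Definition analytic01 (R : realType) (f : R -> R[i]) : Prop :=
  exists (a b : R) (g : R -> R[i]),
    [/\ a < 0, 1 < b,
        (forall x, 0 <= x <= 1 -> g x = f x) &
        (forall x0, a < x0 < b ->
           exists (c : nat -> R[i]) (r : R), 0 < r /\
             forall x, a < x < b -> `|x - x0| < r ->
               series_to (fun k => c k * real_complex R ((x - x0) ^+ k)) (g x))].

(* Main.v *)
Require Import Defs.
From HB Require Import structures.
From mathcomp Require Import all_boot all_order all_algebra all_field.
From mathcomp Require Import boolp classical_sets functions reals.
From mathcomp Require Import complex.
From mathcomp Require Import zify ring lra.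
Import Order.TTheory GRing.Theory Num.Theory.
Local Open Scope ring_scope.

Lemma my_map_resultant (aR rR : nzRingType) (f : {rmorphism aR -> rR}) p q :
    f (lead_coef p) != 0 -> f (lead_coef q) != 0 ->
  f (resultant p q)= resultant (map_poly f p) (map_poly f q).
Proof.
move=> nz_fp nz_fq; rewrite /resultant /Sylvester_mx !size_map_poly_id0 //.
rewrite -det_map_mx /= map_col_mx; congr (\det (col_mx _ _));
  by apply: map_lin1_mx => v; rewrite map_poly_rV rmorphM /= map_rVpoly.
Qed.

Definition Dc (K : comNzRingType) n (M : 'M[K]_n) :=
  resultant (char_poly M) (char_poly M)^`().
Arguments Dc {K n} M.

Lemma Dc_map (K : comNzRingType) (L : numDomainType) (f : {rmorphism K -> L}) n
  (M : 'M[K]_n.+1) : f (Dc M) = Dc (map_mx f M).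
Proof.
set chi := char_poly M.
have szchi : size chi = n.+2 by rewrite size_char_poly.
have lc : lead_coef chi = 1 by apply/monicP; exact: char_poly_monic.
have cn : chi^`()`_n = n.+1%:R.
  have h1 : chi`_n.+1 = 1 by rewrite -lc lead_coefE szchi.
  by rewrite coef_deriv h1.
have nz : (n.+1%:R : K) != 0.
  apply/eqP => h; have := congr1 f h; rewrite rmorph_nat rmorph0 => /eqP.
  by rewrite pnatr_eq0.
have szd : size chi^`() = n.+1.
  apply/eqP; rewrite eqn_leq; apply/andP; split.
    have := @lt_size_deriv _ chi; rewrite szchi; apply.
    by rewrite -size_poly_eq0 szchi.
  by rewrite ltnNge; apply/negP => /leq_sizeP /(_ n (leqnn n)) /eqP; rewrite cn (negPf nz).
have lcd : lead_coef chi^`() = n.+1%:R by rewrite lead_coefE szd.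
rewrite /Dc my_map_resultant ?lc ?lcd ?rmorph1 ?rmorph_nat ?oner_neq0 ?pnatr_eq0 //.
rewrite map_char_poly -deriv_map map_char_poly.
by [].
Qed.

Lemma sep_Dc (F : idomainType) n (M : 'M[F]_n) :
  (Dc M != 0) = separable_poly (char_poly M).
Proof.
rewrite /Dc resultant_eq0 unlock /separable_poly coprimep_def -leqNgt.
have : gcdp (char_poly M) (char_poly M)^`() != 0.
  by rewrite gcdp_eq0 negb_and -size_poly_eq0 size_char_poly.
rewrite -size_poly_eq0; case: (size _) => [|[|k]] //.
Qed.

Lemma Dc_distinct (R : realType) n (M : 'M[R[i]]_n.+1) :
  Dc M != 0 <-> distinct_eigs M.
Proof.
rewrite sep_Dc; split.
  case: (closed_field_poly_normal (char_poly M)) => r Hr.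
  have lc : lead_coef (char_poly M) = 1 by apply/monicP; exact: char_poly_monic.
  rewrite lc scale1r in Hr.
  rewrite Hr separable_prod_XsubC => ur.
  exists r; split => //.
    have := size_char_poly M; rewrite Hr size_prod_XsubC; by case.
  apply/allP => z zr; rewrite eigenvalue_root_char Hr root_prod_XsubC //.
case=> s [us ss als].
have rs : all (root (char_poly M)) s.
  apply/allP => z zs; rewrite -eigenvalue_root_char; exact: (allP als).
have [q Hq] := uniq_roots_prod_XsubC rs (ltac:(by rewrite uniq_rootsE)).
have Pnz : \prod_(z <- s) ('X - z%:P) != 0.
  by rewrite -size_poly_eq0 size_prod_XsubC.
have qnz : q != 0.
  by apply/eqP => q0; have := size_char_poly M; rewrite Hq q0 mul0r size_poly0.
have szq : size q = 1%N.
  have := size_char_poly M; rewrite Hq size_mul // size_prod_XsubC ss.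
  move=> h; have : (0 < size q)%N by rewrite size_poly_gt0.
  move: h; case: (size q) => [|k] //= h _; move: h. lia.
have q1 : q = 1.
  have lc : lead_coef (char_poly M) = 1 by apply/monicP; exact: char_poly_monic.
  rewrite Hq lead_coefM (monicP (monic_prod_XsubC _ _ _)) mulr1 in lc.
  have l0 : lead_coef q = q`_0 by rewrite lead_coefE szq.
  by rewrite (size1_polyC (eq_leq szq)) -l0 lc.
by rewrite Hq q1 mul1r separable_prod_XsubC.
Qed.

Set Implicit Arguments. Unset Strict Implicit. Unset Printing Implicit Defensive.

Section Cabs.
Variable R : realType.
Local Open Scope complex_scope.
Implicit Types (z w : R[i]) (x y : R).

Lemma cabsE z : (cabs z)%:C = `|z|.
Proof. by rewrite normc_def; case: z. Qed.

Lemma cabs_ge0 z : 0 <= cabs z.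
Proof. by have := normr_ge0 z; rewrite -cabsE -(rmorph0 (real_complex R)) lecR. Qed.

Lemma cabsD z w : cabs (z + w) <= cabs z + cabs w.
Proof. by rewrite -lecR rmorphD /= !cabsE ler_normD. Qed.

Lemma cabsM z w : cabs (z * w) = cabs z * cabs w.
Proof. by apply: complexI; rewrite rmorphM /= !cabsE normrM. Qed.

Lemma cabsN z : cabs (- z) = cabs z.
Proof. by apply: complexI; rewrite !cabsE normrN. Qed.

Lemma cabsB z w : cabs (z - w) <= cabs z + cabs w.
Proof. by rewrite -(cabsN w) cabsD. Qed.

Lemma cabsR x : cabs (x%:C) = `|x|.
Proof. by rewrite /cabs /= expr0n /= addr0 sqrtr_sqr. Qed.

Lemma cabs0 : cabs (0 : R[i]) = 0.
Proof. by rewrite -(rmorph0 (real_complex R)) cabsR normr0. Qed.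

Lemma cabs1 : cabs (1 : R[i]) = 1.
Proof. by rewrite -(rmorph1 (real_complex R)) cabsR normr1. Qed.

Lemma cabs_eq0 z : cabs z = 0 -> z = 0.
Proof. by move=> h; apply/eqP; rewrite -normr_eq0 -cabsE h. Qed.

Lemma cabs_sum (I : Type) (r : seq I) (P : pred I) (F : I -> R[i]) :
  cabs (\sum_(i <- r | P i) F i) <= \sum_(i <- r | P i) cabs (F i).
Proof.
elim/big_rec2: _ => [|i y1 y2 _ h]; first by rewrite cabs0.
by apply: le_trans (cabsD _ _) _; rewrite lerD2l.
Qed.

Lemma cabs_tri3 z w u : cabs (z - u) <= cabs (z - w) + cabs (w - u).
Proof. have -> : z - u = (z - w) + (w - u) by rewrite addrA subrK. exact: cabsD. Qed.

End Cabs.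

Lemma cauchy_split (K : comNzRingType) (cf cg : nat -> K) (x : K) N :
  (\poly_(k < N) cf k).[x] * (\poly_(k < N) cg k).[x]
   - \sum_(k < N) (\sum_(i < k.+1) cf i * cg (k - i)%N) * x ^+ k
   = \sum_(j < N) ((\poly_(k < N) cf k) * (\poly_(k < N) cg k))`_(N + j) * x ^+ (N + j).
Proof.
set Pa := \poly_(k < N) cf k; set Pb := \poly_(k < N) cg k.
rewrite -hornerM (@horner_coef_wide _ (N + N)); last first.
  apply: leq_trans (size_polyMleq _ _) _.
  have := size_poly N cf; have := size_poly N cg; rewrite -/Pa -/Pb.
  case: (size Pa) => [|a]; case: (size Pb) => [|b] //=; lia.
rewrite big_split_ord /=.
have -> : \sum_(i < N) (Pa * Pb)`_(lshift N i) * x ^+ (lshift N i)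
   = \sum_(k < N) (\sum_(i < k.+1) cf i * cg (k - i)%N) * x ^+ k.
  apply: eq_bigr => k _; rewrite coefM /=; congr (_ * _).
  apply: eq_bigr => i _; rewrite !coef_poly.
  have ik : (i < N)%N by apply: leq_ltn_trans (ltn_ord k); rewrite -ltnS.
  have kiN : (k - i < N)%N by apply: leq_ltn_trans (ltn_ord k); rewrite leq_subr.
  by rewrite ik kiN.
by rewrite addrAC subrr add0r.
Qed.

Section PS.
Variable R : realType.
Local Open Scope complex_scope.
Implicit Types (f g : R -> R[i]) (c : nat -> R[i]) (x y s h M r : R).

Definition psum c h N : R[i] := \sum_(k < N) c k * (h ^+ k)%:C.

Definition PSd f s c M r : Prop :=
  forall h, `|h| <= r -> forall N : nat,
    cabs (f (s + h) - psum c h N) <= M * (`|h| / r) ^+ N.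

Lemma psumS c h N : psum c h N.+1 = psum c h N + c N * (h ^+ N)%:C.
Proof. by rewrite /psum big_ord_recr. Qed.

Lemma psum0 c h : psum c h 0 = 0.
Proof. by rewrite /psum big_ord0. Qed.

Lemma PSd_M0 f s c M r : 0 < r -> PSd f s c M r -> 0 <= M.
Proof.
move=> r0 H; have h0 : `|0 : R| <= r by rewrite normr0 ltW.
have := H 0 h0 0%N; rewrite expr0 mulr1 => h.
exact: le_trans (cabs_ge0 _) h.
Qed.

Lemma q_ge0 h r : 0 < r -> 0 <= `|h| / r.
Proof. by move=> r0; rewrite divr_ge0 // ltW. Qed.

Lemma q_le1 h r : 0 < r -> `|h| <= r -> `|h| / r <= 1.
Proof. by move=> r0 hr; rewrite ler_pdivrMr // mul1r. Qed.

Lemma PSd_shrink f s c M r r' : 0 < r' -> r' <= r -> PSd f s c M r -> PSd f s c M r'.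
Proof.
move=> r'0 r'r H h hr N; have r0 : 0 < r by apply: lt_le_trans r'r.
apply: (le_trans (H h (le_trans hr r'r) N)).
apply: ler_wpM2l; first exact: PSd_M0 H.
apply: lerXn2r; rewrite ?nnegrE ?q_ge0 //.
apply: ler_wpM2l => //; by rewrite lef_pV2 ?posrE.
Qed.

Lemma PSd_coef f s c M r h k : 0 < r -> PSd f s c M r -> `|h| <= r ->
  cabs (c k * (h ^+ k)%:C) <= 2 * M * (`|h| / r) ^+ k.
Proof.
move=> r0 H hr.
have -> : c k * (h ^+ k)%:C = (f (s + h) - psum c h k) - (f (s + h) - psum c h k.+1).
  by rewrite psumS; ring.
apply: le_trans (cabsB _ _) _.
have M0 := PSd_M0 r0 H.
have := H h hr k; have := H h hr k.+1; rewrite exprS => h1 h2.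
have : M * (`|h| / r * (`|h| / r) ^+ k) <= M * (`|h| / r) ^+ k.
  apply: ler_wpM2l => //; apply: ler_piMl; rewrite ?exprn_ge0 ?q_ge0 ?q_le1 //.
move=> h3; lra.
Qed.

Lemma PSd_const s a : PSd (fun _ => a) s (fun k => if k == 0%N then a else 0) (cabs a) 1.
Proof.
move=> h h1 [|N]; first by rewrite psum0 subr0 expr0 mulr1.
rewrite /psum big_ord_recl /= expr0 mulr1 big1 ?addr0 ?subrr ?cabs0.
  by rewrite mulr_ge0 ?exprn_ge0 ?cabs_ge0 ?q_ge0.
by move=> i _; rewrite mul0r.
Qed.

Lemma PSd_sub f g s cf cg Mf Mg r : PSd f s cf Mf r -> PSd g s cg Mg r ->
  PSd (fun x => f x - g x) s (fun k => cf k - cg k) (Mf + Mg) r.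
Proof.
move=> Hf Hg h hr N.
have -> : f (s + h) - g (s + h) - psum (fun k => cf k - cg k) h N =
   (f (s + h) - psum cf h N) - (g (s + h) - psum cg h N).
  rewrite /psum; under eq_bigr do rewrite mulrBl; rewrite sumrB; ring.
apply: le_trans (cabsB _ _) _; rewrite mulrDl; exact: lerD (Hf h hr N) (Hg h hr N).
Qed.


Lemma geom2 (x : R) N : 0 <= x -> x <= 2^-1 -> \sum_(j < N) x ^+ j <= 2.
Proof.
move=> x0 x2; elim: N => [|N IH]; first by rewrite big_ord0.
rewrite big_ord_recl expr0.
under eq_bigr do rewrite exprS.
rewrite -mulr_sumr.
have : x * \sum_(i < N) x ^+ i <= 2^-1 * 2.
  apply: ler_pM => //; apply: sumr_ge0 => i _; exact: exprn_ge0.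
rewrite mulVf ?pnatr_eq0 //; lra.
Qed.

Lemma pow2_bound m : (m.+1%:R : R) <= 2 ^+ m.
Proof. by rewrite -natrX ler_nat; apply: ltn_expl. Qed.

Lemma PSd_polycoef f s c M r h N i : 0 < r -> PSd f s c M r -> `|h| <= r ->
  cabs ((\poly_(k < N) c k)`_i * h%:C ^+ i) <= 2 * M * (`|h| / r) ^+ i.
Proof.
move=> r0 H hr; rewrite coef_poly; case: ifP => _.
  by rewrite -rmorphXn; exact: PSd_coef H hr.
rewrite mul0r cabs0 mulr_ge0 ?exprn_ge0 ?q_ge0 // mulr_ge0 //; exact: PSd_M0 H.
Qed.

Lemma PSd_mul f g s cf cg Mf Mg r : 0 < r -> PSd f s cf Mf r -> PSd g s cg Mg r ->
  PSd (fun x => f x * g x) s (fun k => \sum_(i < k.+1) cf i * cg (k - i)%N)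
      (11 * Mf * Mg) (r / 4).
Proof.
move=> r0 Hf Hg h hr N.
have r4 : 0 < r / 4 by rewrite divr_gt0.
have hr1 : `|h| <= r by apply: le_trans hr _; rewrite ler_pdivrMr // ler_peMr // ?ltW //; timeout 10 lra.
have Mf0 := PSd_M0 r0 Hf; have Mg0 := PSd_M0 r0 Hg.
set q := `|h| / r; set q' := `|h| / (r / 4).
have q0 : 0 <= q by exact: q_ge0.
have qq : q' = 4 * q by rewrite /q' /q invfM invrK; timeout 10 ring.
have q'1 : q' <= 1 by exact: q_le1.
have qNq : q ^+ N <= q' ^+ N.
  have qq' : q <= q' by rewrite qq; timeout 10 lra.
  by apply: lerXn2r; rewrite ?nnegrE // (le_trans q0 qq').
set F := f (s + h); set G := g (s + h).
set A := psum cf h N; set B := psum cg h N.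
set D := psum _ h N.
have bF : cabs (F - A) <= Mf * q ^+ N := Hf h hr1 N.
have bG : cabs (G - B) <= Mg * q ^+ N := Hg h hr1 N.
have bG0 : cabs G <= Mg.
  by have := Hg h hr1 0%N; rewrite psum0 subr0 expr0 mulr1.
have bA : cabs A <= 2 * Mf.
  have := Hf h hr1 0%N; rewrite psum0 subr0 expr0 mulr1 => bF0.
  have : cabs A <= cabs F + cabs (F - A).
    by have := cabs_tri3 A F 0; rewrite !subr0 -(cabsN (A - F)) opprB addrC.
  have : Mf * q ^+ N <= Mf.
    by apply: ler_piMr => //; rewrite exprn_ile1 // q_le1.
  timeout 10 lra.
pose Pa := \poly_(k < N) cf k; pose Pb := \poly_(k < N) cg k.
set hC := h%:C.
have eA : A = Pa.[hC].
  by rewrite horner_poly /A /psum; apply: eq_bigr => k _; rewrite rmorphXn.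
have eB : B = Pb.[hC].
  by rewrite horner_poly /B /psum; apply: eq_bigr => k _; rewrite rmorphXn.
have eAB : A * B - D = \sum_(j < N) (Pa * Pb)`_(N + j) * hC ^+ (N + j).
  rewrite eA eB -cauchy_split /D /psum; congr (_ - _).
  by apply: eq_bigr => k _; rewrite rmorphXn.
have bterm : forall m, cabs ((Pa * Pb)`_m * hC ^+ m) <= (m.+1)%:R * (4 * Mf * Mg) * q ^+ m.
  move=> m; rewrite coefM mulr_suml; apply: le_trans (cabs_sum _ _ _) _.
  apply: le_trans (ler_sum _ (fun (i : 'I_m.+1) _ => _ : _ <= 4 * Mf * Mg * q ^+ m)) _.
    move=> i _.
    have im : (i <= m)%N by rewrite -ltnS.
    have -> : hC ^+ m = hC ^+ i * hC ^+ (m - i) by rewrite -exprD subnKC.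
    have -> : Pa`_i * Pb`_(m - i) * (hC ^+ i * hC ^+ (m - i)) =
              (Pa`_i * hC ^+ i) * (Pb`_(m - i) * hC ^+ (m - i)) by timeout 10 ring.
    rewrite cabsM.
    have b1 := PSd_polycoef N i r0 Hf hr1.
    have b2 := PSd_polycoef N (m - i) r0 Hg hr1.
    rewrite -/Pa -/q in b1; rewrite -/Pb -/q in b2.
    have -> : 4 * Mf * Mg * q ^+ m = (2 * Mf * q ^+ i) * (2 * Mg * q ^+ (m - i)).
      have -> : q ^+ m = q ^+ i * q ^+ (m - i) by rewrite -exprD subnKC.
      timeout 10 ring.
    by apply: ler_pM; rewrite ?cabs_ge0.
  by rewrite sumr_const card_ord -mulr_natl le_eqVlt; apply/orP; left; apply/eqP; timeout 10 ring.
have bAB : cabs (A * B - D) <= 8 * Mf * Mg * q' ^+ N.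
  rewrite eAB; apply: le_trans (cabs_sum _ _ _) _.
  apply: le_trans (ler_sum _ (fun (j : 'I_N) _ => _ : _ <= 4 * Mf * Mg * q' ^+ N * 2^-1 ^+ j)) _.
    move=> j _; apply: le_trans (bterm _) _.
    have e1 : (N + j).+1%:R * q ^+ (N + j) <= q' ^+ N * 2^-1 ^+ j.
      apply: le_trans (_ : 2 ^+ (N + j) * q ^+ (N + j) <= _).
        by apply: ler_wpM2r; rewrite ?exprn_ge0 ?pow2_bound.
      rewrite -exprMn.
      have -> : 2 * q = q' * 2^-1 by rewrite qq; timeout 10 field.
      have q'0 : 0 <= q' by rewrite qq mulr_ge0.
      have i0 : 0 <= 2^-1 :> R by rewrite invr_ge0.
      have i1 : 2^-1 <= 1 :> R by rewrite invf_le1 //; timeout 10 lra.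
      rewrite exprMn; apply: ler_pM; rewrite ?exprn_ge0 //.
        by rewrite exprD; apply: ler_piMr; rewrite ?exprn_ge0 ?exprn_ile1.
      by rewrite exprD; apply: ler_piMl; rewrite ?exprn_ge0 ?exprn_ile1.
    have h0 : 0 <= 4 * Mf * Mg by rewrite !mulr_ge0.
    have e2 := ler_wpM2l h0 e1.
    apply: le_trans (le_trans _ e2) _; rewrite le_eqVlt; apply/orP; left; apply/eqP; timeout 10 ring.
  rewrite -mulr_sumr.
  have := geom2 N (_ : 0 <= 2^-1 :> R) (lexx _); rewrite invr_ge0 ler0n => /(_ isT) g2.
  have : 0 <= 4 * Mf * Mg * q' ^+ N by rewrite !mulr_ge0 ?exprn_ge0 // qq mulr_ge0.
  move=> h0; have := ler_wpM2l h0 g2; timeout 10 lra.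
have -> : F * G - D = (F - A) * G + A * (G - B) + (A * B - D) by timeout 10 ring.
apply: le_trans (cabsD _ _) _; apply: le_trans (lerD (cabsD _ _) (lexx _)) _.
rewrite !cabsM.
have : cabs (F - A) * cabs G <= Mf * q ^+ N * Mg by apply: ler_pM; rewrite ?cabs_ge0.
have : cabs A * cabs (G - B) <= 2 * Mf * (Mg * q ^+ N) by apply: ler_pM; rewrite ?cabs_ge0.
have : Mf * Mg * q ^+ N <= Mf * Mg * q' ^+ N by apply: ler_wpM2l => //; rewrite mulr_ge0.
move: bAB; clear; set X1 := cabs _; set X2 := cabs _; set X3 := cabs _.
set Q := q ^+ N; set Q' := q' ^+ N.
move=> h3 h4 h2 h1; timeout 10 lra.
Qed.

End PS.


Section Ident.
Variable R : realType.
Local Open Scope complex_scope.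
Implicit Types (f g : R -> R[i]) (c : nat -> R[i]) (x y s h M r : R).

Lemma small_lin x K r : 0 < r -> (forall h, 0 < h -> h <= r -> x <= K * h) -> x <= 0.
Proof.
move=> r0 H; rewrite leNgt; apply/negP => x0.
have K0 : 0 < K.
  have := H r r0 (lexx r) => h1.
  by rewrite -(pmulr_lgt0 _ r0); apply: lt_le_trans h1.
pose h := Num.min r (x / (2 * K)).
have h0 : 0 < h by rewrite lt_min r0 divr_gt0 // mulr_gt0.
have hr : h <= r by rewrite ge_min lexx.
have hx : h <= x / (2 * K) by rewrite ge_min lexx orbT.
have := H h h0 hr.
have : K * h <= K * (x / (2 * K)) by rewrite ler_pM2l.
have -> : K * (x / (2 * K)) = x / 2 by field; rewrite lt0r_neq0.
move=> h1 h2; lra.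
Qed.

Lemma geom_zero x M : (forall N : nat, x <= M * (2^-1) ^+ N) -> x <= 0.
Proof.
move=> H; rewrite leNgt; apply/negP => x0.
have HN : forall N : nat, x * N.+1%:R <= M.
  move=> N; have h1 := H N.
  have M0 : 0 <= M.
    have := H 0%N; rewrite expr0 mulr1 => hM; apply: le_trans hM; exact: ltW.
  have h2 : (2^-1) ^+ N * N.+1%:R <= 1 :> R.
    rewrite exprVn -[X in _ <= X](@mulVf _ (2 ^+ N)) ?expf_neq0 ?pnatr_eq0 //.
    by apply: ler_wpM2l; rewrite ?invr_ge0 ?exprn_ge0 ?pow2_bound.
  have := ler_wpM2r (ler0n _ N.+1) h1.
  have := ler_wpM2l M0 h2.
  rewrite mulr1 -mulrA => h3 h4; exact: le_trans h4 h3.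
have M0 : 0 < M by have := HN 0%N; rewrite mulr1 => h; apply: lt_le_trans h.
have hb := @archi_boundP _ (M / x) (ltW (divr_gt0 M0 x0)).
set N := Num.Def.archi_bound _ in hb.
rewrite ltr_pdivrMr // in hb.
have := HN N; rewrite -natr1 => h1.
move: hb h1 x0; clear; move=> hb h1 x0; nra.
Qed.

Lemma PSd_ident f s c M r : 0 < r -> PSd f s c M r ->
  (forall h, - r <= h -> h < 0 -> f (s + h) = 0) ->
  forall h, `|h| <= r / 2 -> f (s + h) = 0.
Proof.
move=> r0 H Z.
have M0 := PSd_M0 r0 H.
have c0 : forall N, c N = 0.
  elim/ltn_ind => N IH.
  apply: cabs_eq0; apply/eqP; rewrite eq_le cabs_ge0 andbT.
  apply: (@small_lin _ (M / r ^+ N.+1) r r0) => h h0 hr.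
  have hr' : `|- h| <= r by rewrite normrN ger0_norm // ltW.
  have := H (- h) hr' N.+1.
  rewrite Z ?lerN2 ?oppr_lt0 // psumS.
  have -> : psum c (- h) N = 0.
    by rewrite /psum big1 // => i _; rewrite IH ?mul0r.
  rewrite !add0r cabsN cabsM cabsR normrX normrN (ger0_norm (ltW h0)).
  have hN : 0 < h ^+ N by rewrite exprn_gt0.
  move=> h1; rewrite -(ler_pM2r hN).
  have -> : M / r ^+ N.+1 * h * h ^+ N = M * (h / r) ^+ N.+1.
    rewrite expr_div_n (exprS h); set a := h ^+ N; set b := r ^+ N.+1; ring.
  by [].
move=> h hr; apply: cabs_eq0; apply/eqP; rewrite eq_le cabs_ge0 andbT.
apply: (@geom_zero _ M) => N.
have hr1 : `|h| <= r by apply: le_trans hr _; rewrite ler_pdivrMr //; lra.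
have := H h hr1 N.
have -> : psum c h N = 0 by rewrite /psum big1 // => i _; rewrite c0 mul0r.
rewrite subr0 => h1; apply: le_trans h1 _.
apply: ler_wpM2l => //; apply: lerXn2r; rewrite ?nnegrE ?q_ge0 ?invr_ge0 //.
by rewrite ler_pdivrMr //; move: hr; clear; lra.
Qed.

End Ident.


Section Ana.
Variable R : realType.
Local Open Scope complex_scope.
Implicit Types (f g : R -> R[i]) (c : nat -> R[i]) (x y s h M r : R).

Lemma term_le_sum (u : nat -> R[i]) k N : (k < N)%N ->
  cabs (u k) <= \sum_(j < N) cabs (u j).
Proof.
move=> kN; rewrite (bigD1 (Ordinal kN)) //=; rewrite lerDl.
by apply: sumr_ge0 => i _; exact: cabs_ge0.
Qed.

Lemma series_bounded (u : nat -> R[i]) L : series_to u L ->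
  exists K, forall k, cabs (u k) <= K.
Proof.
move=> /(_ 1 ltr01) [N0 HN0].
exists (2 + \sum_(j < N0) cabs (u j)) => k.
have s0 : 0 <= \sum_(j < N0) cabs (u j) by apply: sumr_ge0 => i _; exact: cabs_ge0.
case: (ltnP k N0) => kN.
  by have := term_le_sum u kN; lra.
have e : u k = (\sum_(j < k.+1) u j - L) - (\sum_(j < k) u j - L).
  by rewrite big_ord_recr /=; ring.
have h1 := HN0 k.+1 (leqW kN); have h2 := HN0 k kN.
have := cabsB (\sum_(j < k.+1) u j - L) (\sum_(j < k) u j - L); rewrite -e.
lra.
Qed.

Lemma analytic_PSd g a b x0 c r : a < x0 -> x0 < b -> 0 < r ->
  (forall x, a < x < b -> `|x - x0| < r ->
     series_to (fun k => c k * real_complex R ((x - x0) ^+ k)) (g x)) ->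
  exists M rho, 0 < rho /\ PSd g x0 c M rho.
Proof.
move=> ax xb r0 Hs.
pose rho := Num.min r (Num.min (x0 - a) (b - x0)) / 2.
have m0 : 0 < Num.min r (Num.min (x0 - a) (b - x0)).
  by rewrite !lt_min r0 !subr_gt0 ax xb.
have rho0 : 0 < rho by rewrite divr_gt0.
have hm1 : Num.min r (Num.min (x0 - a) (b - x0)) <= r by rewrite ge_min lexx.
have hm2 : Num.min r (Num.min (x0 - a) (b - x0)) <= x0 - a by rewrite !ge_min lexx !orbT.
have hm3 : Num.min r (Num.min (x0 - a) (b - x0)) <= b - x0 by rewrite !ge_min lexx !orbT.
have inI : forall h, `|h| <= rho -> a < x0 + h < b /\ `|x0 + h - x0| < r.
  move=> h hh; rewrite (addrC x0) addrK.
  have := ler_norm h; have := ler_norm (- h); rewrite normrN.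
  rewrite /rho in hh; move: hh hm1 hm2 hm3 m0; clear; move=> *.
  split; [apply/andP; split|]; lra.
have Sx : forall h, `|h| <= rho ->
    series_to (fun k => c k * (h ^+ k)%:C) (g (x0 + h)).
  move=> h hh; have [h1 h2] := inI h hh.
  by have := Hs _ h1 h2; rewrite (addrC x0) addrK.
have hr : `|rho| <= rho by rewrite ger0_norm // ltW.
have [K HK] := series_bounded (Sx rho hr).
have K0 : 0 <= K by apply: le_trans (HK 0%N); exact: cabs_ge0.
exists (2 * K), (rho / 2); split; first by rewrite divr_gt0.
move=> h hh N.
have hh1 : `|h| <= rho by apply: le_trans hh _; rewrite ler_pdivrMr //; lra.
set q := `|h| / rho.
have q0 : 0 <= q by rewrite divr_ge0 // ltW.
have q2 : q <= 2^-1 by rewrite ler_pdivrMr // mulrC; move: hh; clear; lra.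
have tb : forall k, cabs (c k * (h ^+ k)%:C) <= K * q ^+ k.
  move=> k; have := HK k; rewrite !cabsM !cabsR !normrX.
  have -> : `|h| = q * rho by rewrite /q mulrC mulrCA mulfV ?mulr1 // lt0r_neq0.
  rewrite exprMn (ger0_norm (ltW rho0)) mulrA => h1.
  have qk : 0 <= q ^+ k by rewrite exprn_ge0.
  by rewrite mulrAC; apply: ler_wpM2r.
have qq : q ^+ N <= (`|h| / (rho / 2)) ^+ N.
  have hq' : 0 <= `|h| / (rho / 2) by rewrite divr_ge0 // ltW // divr_gt0.
  apply: lerXn2r; rewrite ?nnegrE //.
  by apply: ler_wpM2l => //; rewrite lef_pV2 ?posrE ?divr_gt0 //; lra.
apply: le_trans (_ : _ <= 2 * K * q ^+ N) _; last first.
  by apply: ler_wpM2l qq; rewrite mulr_ge0.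
apply/ler_addgt0Pr => e e0.
have [N1 HN1] := Sx h hh1 e e0.
have := HN1 (N + N1)%N (leq_addl _ _).
rewrite big_split_ord /= -/(psum c h N) => h1.
set T := \sum_(i < N1) _ in h1.
have bT : cabs T <= 2 * K * q ^+ N.
  rewrite /T; apply: le_trans (cabs_sum _ _ _) _.
  apply: le_trans (ler_sum _ (fun (i : 'I_N1) _ => tb (N + i)%N)) _.
  under eq_bigr do rewrite exprD mulrA.
  rewrite -mulr_sumr.
  have -> : 2 * K * q ^+ N = K * q ^+ N * 2 by ring.
  apply: ler_wpM2l; first by rewrite mulr_ge0 // exprn_ge0.
  exact: geom2.
have := cabs_tri3 (g (x0 + h)) (psum c h N + T) (psum c h N).
have -> : psum c h N + T - psum c h N = T by ring.
have -> : cabs (g (x0 + h) - (psum c h N + T)) = cabs (psum c h N + T - g (x0 + h)).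
  by rewrite -cabsN opprB.
move: h1 bT; clear; move=> *; lra.
Qed.
End Ana.


Lemma rpred_det (T : comNzRingType) (S : subringClosed T) n (A : 'M[T]_n) :
  (forall i j, A i j \in S) -> \det A \in S.
Proof.
move=> H; rewrite /determinant; apply: rpred_sum => s _.
by apply: rpredM; [exact: rpred_sign | apply: rpred_prod => i _; exact: H].
Qed.

Lemma char_poly_over (T : comNzRingType) (S : subringClosed T) n (A : 'M[T]_n) :
  (forall i j, A i j \in S) -> char_poly A \is a polyOver S.
Proof.
move=> H; rewrite /char_poly; apply: rpred_det => i j.
rewrite /char_poly_mx !mxE; apply: rpredB.
  by apply: rpredMn; exact: polyOverX.
by rewrite polyOverC.
Qed.

Lemma Dc_over (T : comNzRingType) (S : subringClosed T) n (A : 'M[T]_n) :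
  (forall i j, A i j \in S) -> Dc A \in S.
Proof.
move=> H; have hc := char_poly_over H.
have hd : (char_poly A)^`() \is a polyOver S by exact: polyOver_deriv.
rewrite /Dc /resultant; apply: rpred_det => i j; rewrite Sylvester_mxE.
case: (fintype.split i) => k; apply: rpredMn.
  by move/polyOverP: hc.
by move/polyOverP: hd.
Qed.

Definition RR (R : realType) : Type := R.
HB.instance Definition _ (R : realType) := Choice.copy (RR R) R.
HB.instance Definition _ (R : realType) := isPointed.Build (RR R) 0.

Definition PSat (R : realType) (s : R) (f : RR R -> R[i]) : Prop :=
  exists c M r, 0 < r /\ PSd f s c M r.

Definition PSpred (R : realType) (s : R) : {pred RR R -> R[i]} :=
  fun f => `[< PSat s f >].

Lemma PSat_common (R : realType) (s : R) f g : PSat s f -> PSat s g ->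
  exists cf cg Mf Mg r, [/\ 0 < r, PSd f s cf Mf r & PSd g s cg Mg r].
Proof.
move=> [cf [Mf [r1 [r10 H1]]]] [cg [Mg [r2 [r20 H2]]]].
have m0 : 0 < Num.min r1 r2 by rewrite lt_min r10 r20.
exists cf, cg, Mf, Mg, (Num.min r1 r2); split => //.
  by apply: PSd_shrink H1 => //; rewrite ge_min lexx.
by apply: PSd_shrink H2 => //; rewrite ge_min lexx orbT.
Qed.

Lemma PS_subring_closed (R : realType) (s : R) : subring_closed (PSpred s).
Proof.
split.
- apply/asboolP; exists (fun k => if k == 0%N then 1 else 0), (cabs (1 : R[i])), 1.
  split; [exact: ltr01 | exact: PSd_const].
- move=> f g /asboolP Hf /asboolP Hg; apply/asboolP.
  have [cf [cg [Mf [Mg [r [r0 H1 H2]]]]]] := PSat_common Hf Hg.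
  exists (fun k => cf k - cg k), (Mf + Mg), r; split => //.
  exact: PSd_sub H1 H2.
- move=> f g /asboolP Hf /asboolP Hg; apply/asboolP.
  have [cf [cg [Mf [Mg [r [r0 H1 H2]]]]]] := PSat_common Hf Hg.
  exists (fun k => \sum_(i < k.+1) cf i * cg (k - i)%N), (11 * Mf * Mg), (r / 4); split.
    by rewrite divr_gt0.
  exact: PSd_mul r0 H1 H2.
Qed.

HB.instance Definition _ (R : realType) (s : R) :=
  GRing.isSubringClosed.Build (RR R -> R[i]) (PSpred s) (PS_subring_closed s).

Definition ev (R : realType) (t : R) : (RR R -> R[i]) -> R[i] := fun f => f t.

Fact ev_is_additive (R : realType) (t : R) : additive (ev t).
Proof. by []. Qed.
Fact ev_is_multiplicative (R : realType) (t : R) : multiplicative (ev t).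
Proof. by []. Qed.
HB.instance Definition _ (R : realType) (t : R) :=
  GRing.isAdditive.Build _ _ (ev t) (ev_is_additive t).
HB.instance Definition _ (R : realType) (t : R) :=
  GRing.isMultiplicative.Build _ _ (ev t) (ev_is_multiplicative t).

Lemma Dc_ev (R : realType) (t : R) n (G : 'M[RR R -> R[i]]_n.+1) :
  (Dc G) t = Dc (map_mx (ev t) G).
Proof. exact: (@Dc_map _ _ (ev t) _ G). Qed.

Lemma Dc_PS (R : realType) (s : R) n (G : 'M[RR R -> R[i]]_n) :
  (forall i j, PSat s (G i j)) -> PSat s (Dc G).
Proof.
move=> H; apply/asboolP; apply: (@Dc_over _ (PSpred s)) => i j.
by apply/asboolP; exact: H.
Qed.


Lemma fin_delta (R : realType) (I : finType) (P : I -> R -> Prop) :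
  (forall i d d', 0 < d' -> d' <= d -> P i d -> P i d') ->
  (forall i, exists2 d, 0 < d & P i d) -> exists2 d, 0 < d & forall i, P i d.
Proof.
move=> mono H.
suff: forall s : seq I, exists2 d, 0 < d & forall i, i \in s -> P i d.
  by case/(_ (enum I)) => d d0 Hd; exists d => // i; apply: Hd; rewrite mem_enum.
elim => [|i s [d d0 Hd]]; first by exists 1.
case: (H i) => di di0 Hi.
have m0 : 0 < Num.min d di by rewrite lt_min d0 di0.
exists (Num.min d di) => // j; rewrite inE => /orP [/eqP -> | js].
  by apply: mono Hi => //; rewrite ge_min lexx orbT.
by apply: mono (Hd j js) => //; rewrite ge_min lexx.
Qed.



Lemma frob_bound (R : realType) n (X : 'M[R[i]]_n) (eta : R) : 0 <= eta ->
  (forall i j, cabs (X i j) <= eta) -> frob X <= n%:R * eta.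
Proof.
move=> eta0 H; rewrite /frob.
have e1 : \sum_(i < n) \sum_(j < n) eta ^+ 2 = (n%:R * eta) ^+ 2.
  rewrite !sumr_const !card_ord -mulrnA exprMn -natrX mulr_natl.
  by [].
have : \sum_i \sum_j cabs (X i j) ^+ 2 <= (n%:R * eta) ^+ 2.
  rewrite -e1.
  apply: ler_sum => i _; apply: ler_sum => j _.
  by apply: lerXn2r; rewrite ?nnegrE ?cabs_ge0.
move=> h; apply: le_trans (ler_wsqrtr h) _.
by rewrite sqrtr_sqr ger0_norm // mulr_ge0.
Qed.


Unset Implicit Arguments.

Theorem theorem4p4 (R : realType) (n : nat) (Gamma : 'M[R[i]]_n -> Prop)
  (HGamma : forall A, Gamma A -> real_spectrum A)
  (Hpath : forall A B, Gamma A -> Gamma B ->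
     exists p : R -> 'M[R[i]]_n,
       [/\ forall i j, analytic01 (fun t => p t i j),
           p 0 = A, p 1 = B &
           forall t, 0 <= t <= 1 -> Gamma (p t)])
  (Hd : exists A, Gamma A /\ distinct_eigs A) :
  forall A, Gamma A -> forall e : R, 0 < e ->
    exists B, [/\ Gamma B, distinct_eigs B & frob (A - B) < e].
Proof.
move=> A GA e e0.
case: n Gamma HGamma Hpath Hd A GA => [|n] Gamma HGamma Hpath Hd A GA.
  exists A; split => //; first by exists [::].
  by rewrite /frob big_ord0 sqrtr0.
case: Hd => B0 [GB0 dB0].
case: (Hpath A B0 GA GB0) => p [Han p0 p1 pG].
have Han' : forall i j, exists g : R -> R[i], exists a b : R,
   [/\ a < 0, 1 < b, (forall x, 0 <= x <= 1 -> g x = p x i j) &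
     (forall x0, a < x0 < b -> exists (c : nat -> R[i]) (r : R), 0 < r /\
        forall x, a < x < b -> `|x - x0| < r ->
          series_to (fun k => c k * real_complex R ((x - x0) ^+ k)) (g x))].
  by move=> i j; case: (Han i j) => a [b [g H]]; exists g, a, b.
pose g i j := projT1 (cid (Han' i j)).
have gP : forall i j, exists a b : R,
   [/\ a < 0, 1 < b, (forall x, 0 <= x <= 1 -> g i j x = p x i j) &
     (forall x0, a < x0 < b -> exists (c : nat -> R[i]) (r : R), 0 < r /\
        forall x, a < x < b -> `|x - x0| < r ->
          series_to (fun k => c k * real_complex R ((x - x0) ^+ k)) (g i j x))].
  by move=> i j; exact: (projT2 (cid (Han' i j))).
have F_eq : forall i j x, 0 <= x <= 1 -> g i j x = p x i j.
  by move=> i j x hx; case: (gP i j) => a [b [_ _ h _]]; exact: h.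
have F_ps : forall i j s, 0 <= s <= 1 -> PSat s (g i j : RR R -> R[i]).
  move=> i j s /andP [s0 s1]; case: (gP i j) => a [b [a0 b1 _ hs]].
  have as0 : a < s by apply: lt_le_trans a0 s0.
  have sb : s < b by apply: le_lt_trans s1 b1.
  have [c [r [r0 Hs]]] := hs s (ltac:(by rewrite as0 sb)).
  have [M [rho [rho0 HP]]] := analytic_PSd as0 sb r0 Hs.
  by exists c, M, rho.
pose Gm : 'M[RR R -> R[i]]_n.+1 := \matrix_(i, j) (g i j : RR R -> R[i]).
pose H := Dc Gm.
have Hev : forall t, 0 <= t <= 1 -> H t = Dc (p t).
  move=> t ht; rewrite /H Dc_ev; congr Dc; apply/matrixP => i j.
  by rewrite !mxE /ev F_eq.
have Hps : forall s, 0 <= s <= 1 -> PSat s H.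
  by move=> s hs; apply: Dc_PS => i j; rewrite mxE; exact: F_ps.
have H1 : H 1 != 0.
  by rewrite Hev ?ler01 ?lexx // p1; apply/Dc_distinct.
have Hclaim : forall d, 0 < d -> exists t, [/\ 0 <= t, t <= d, t <= 1 & H t != 0].
  move=> d d0.
  case: (pselect (exists t, [/\ 0 <= t, t <= d, t <= 1 & H t != 0])) => // Hno.
  exfalso.
  set d1 := Num.min d 1.
  have d10 : 0 < d1 by rewrite lt_min d0 ltr01.
  have d1d : d1 <= d by rewrite ge_min lexx.
  have d11 : d1 <= 1 by rewrite ge_min lexx orbT.
  have Z0 : forall t, 0 <= t -> t <= d1 -> H t = 0.
    move=> t t0 td; apply/eqP; apply/negPn/negP => Hn; apply: Hno; exists t.
    by split => //; [exact: le_trans td d1d | exact: le_trans td d11].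
  pose E : set R := fun u => 0 <= u <= 1 /\ (forall t, 0 <= t -> t <= u -> H t = 0).
  have Ed1 : E d1 by split => //; rewrite (ltW d10) d11.
  have ubE : ubound E 1 by move=> u [/andP [_ h] _].
  have hsE : has_sup E by split; [exists d1 | exists 1].
  set S := sup E.
  have S1 : d1 <= S := sup_upper_bound hsE Ed1.
  have S2 : S <= 1 := ge_sup (ex_intro _ d1 Ed1) ubE.
  have S0 : 0 < S by apply: lt_le_trans S1.
  have adh : forall t, 0 <= t -> t < S -> H t = 0.
    move=> t t0 tS.
    have [u Eu hu] := @sup_adherent _ E (S - t) (ltac:(by rewrite subr_gt0)) hsE.
    case: Eu => _ Eu2; apply: Eu2 => //; rewrite -/S in hu; apply: ltW; lra.
  have [c [M [r [r0 Hr]]]] := Hps S (ltac:(by rewrite (ltW S0) S2)).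
  set r' := Num.min r d1.
  have r'0 : 0 < r' by rewrite lt_min r0 d10.
  have r'r : r' <= r by rewrite ge_min lexx.
  have r'd : r' <= d1 by rewrite ge_min lexx orbT.
  have Hr' := PSd_shrink r'0 r'r Hr.
  have Hz := PSd_ident r'0 Hr' (fun h h1 h2 => adh (S + h)
     (ltac:(move: h1 r'd S1; clear; lra)) (ltac:(move: h2; clear; lra))).
  set u' := Num.min 1 (S + r' / 2).
  have Eu' : E u'.
    split.
      by rewrite ge_min lexx /= andbT le_min ler01 /=; move: S0 r'0; clear; lra.
    move=> t t0 tu; case: (ltP t S) => tS; first exact: adh.
    have tu2 : t <= S + r' / 2 by move: tu; rewrite le_min => /andP [].
    have := Hz (t - S) (ltac:(rewrite ger0_norm ?subr_ge0 //; move: tu2; clear; lra)).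
    by have -> : S + (t - S) = t by ring.
  case: (lerP 1 (S + r' / 2)) => hc.
    have u1 : u' = 1 by rewrite /u' min_l.
    have := Eu'.2 1 ler01; rewrite u1 lexx => /(_ isT) h1.
    by move: H1; rewrite h1 eqxx.
  have u2 : u' = S + r' / 2 by rewrite /u' min_r // ltW.
  have := sup_upper_bound hsE Eu'; rewrite -/S u2.
  move: r'0; clear; lra.
have Hclose : exists2 d, 0 < d & forall t, 0 <= t -> t <= d -> t <= 1 ->
    frob (A - p t) < e.
  pose eta := e / (n.+1%:R + 1).
  have eta0 : 0 < eta by rewrite divr_gt0 // ltr_wpDl ?ler0n.
  have [d d0 Hd] : exists2 d, 0 < d & forall ij : 'I_n.+1 * 'I_n.+1, forall t, 0 <= t -> t <= d ->
      cabs (g ij.1 ij.2 t - g ij.1 ij.2 0) <= eta.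
    apply: (@fin_delta R _ (fun ij d => forall t, 0 <= t -> t <= d ->
      cabs (g ij.1 ij.2 t - g ij.1 ij.2 0) <= eta)).
      by move=> ij d1 d2 d20 d21 Hd1 t t0 td; apply: Hd1 => //; apply: le_trans td d21.
    move=> [i j] /=.
    have [c [M [r [r0 Hr]]]] := F_ps i j 0 (ltac:(by rewrite lexx ler01)).
    have M0 := PSd_M0 r0 Hr.
    have M10 : 0 < M + 1 by move: M0; clear; lra.
    pose d := Num.min r (eta * r / (M + 1)).
    have dd : 0 < d by rewrite lt_min r0 !divr_gt0 // mulr_gt0.
    exists d => // t t0 td.
    have tr : t <= r by apply: le_trans td _; rewrite ge_min lexx.
    have te : t <= eta * r / (M + 1) by apply: le_trans td _; rewrite ge_min lexx orbT.
    have ps1 : forall h, psum c h 1 = c 0%N.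
      by move=> h; rewrite /psum big_ord1 expr0 rmorph1 mulr1.
    have h1 := Hr t (ltac:(by rewrite ger0_norm)) 1%N.
    have h0 := Hr 0 (ltac:(by rewrite normr0 ltW)) 1%N.
    rewrite ps1 add0r ger0_norm // expr1 in h1.
    rewrite ps1 addr0 normr0 mul0r expr1 mulr0 in h0.
    apply: le_trans (cabs_tri3 _ (c 0%N) _) _.
    have -> : cabs (c 0%N - g i j 0) = cabs (g i j 0 - c 0%N) by rewrite -cabsN opprB.
    apply: le_trans (lerD h1 h0) _; rewrite addr0.
    have : M * (t / r) <= M * (eta * r / (M + 1) / r).
      by apply: ler_wpM2l => //; apply: ler_wpM2r => //; rewrite invr_ge0 ltW.
    have -> : M * (eta * r / (M + 1) / r) = eta * (M / (M + 1)).
      by field; rewrite !lt0r_neq0.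
    have : eta * (M / (M + 1)) <= eta.
      apply: ler_piMr; first exact: ltW.
      by rewrite ler_pdivrMr // mul1r; move: M0; clear; lra.
    move=> *; lra.
  exists d => // t t0 td t1.
  have X : forall i j, cabs ((A - p t) i j) <= eta.
    move=> i j; rewrite !mxE -p0 -F_eq ?lexx ?ler01 // -F_eq ?t0 ?t1 //.
    by rewrite -cabsN opprB; exact: (Hd (i, j) t t0 td).
  apply: le_lt_trans (frob_bound (ltW eta0) X) _.
  have hp : 0 < n.+1%:R + 1 :> R by rewrite ltr_wpDl ?ler0n.
  rewrite /eta mulrA ltr_pdivrMr // mulrDr mulr1 mulrC ltrDl //.
have [d d0 Hd] := Hclose.
have [t [t0 td t1 Ht]] := Hclaim d d0.
exists (p t); split.
- by apply: pG; rewrite t0 t1.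
- by apply/Dc_distinct; rewrite -Hev ?t0 ?t1.
- exact: Hd.
Qed.
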